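(* Let $G$ be a finite group with $Z(G)=1$, $H\subseteq G$ an abelian subgroup, $\omega$ a non-degenerate 2-cocycle on $\widehat H$, and $A=(kG)^J$ with $J=\sum_{\alpha,\beta\in\widehat H}\omega(\alpha,\beta)e_\alpha\otimes e_\beta$. Then $|H|$ divides $[A^*:G(A^* )\cap Z(A^* )]=\dim A/|G(A^* )\cap Z(A^* )|$.
   Context: $k$ is an algebraically closed field of characteristic zero. For a twist $J$ in a Hopf algebra $A$, $A^J$ is the Hopf algebra with the same algebra and counit, comultiplication $\Delta^J(h)=J^{-1}\Delta(h)J$ and antipode $S^J(h)=v^{-1}S(h)v$, $v=m(S\otimes\mathrm{id})(J)$. For an abelian subgroup $H$ of $G$, $\widehat H$ is its character group, $e_\chi=\frac{1}{|H|}\sum_{h\in H}\chi(h^{-1})h$ for $\chi\in\widehat H$, and for a 2-cocycle $\omega$ on $\widehat H$ the element $J=\sum\omega(\alpha,\beta)e_\alpha\otimes e_\beta$ is a twist in $kG$. $\chi\in\widehat H$ is $\omega$-regular if $\omega(\chi,\psi)=\omega(\psi,\chi)$ for all $\psi\in\widehat H$; $\omega$ is non-degenerate if only the trivial character is $\omega$-regular. $G(A^* )=\widehat G$ is the group of group-likes of $A^*$ and $Z(A^* )$ its center. *)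

(* Defs.v *)
From HB Require Import structures.
From mathcomp Require Import all_boot all_order all_algebra all_fingroup all_solvable.
Set Implicit Arguments. Unset Strict Implicit. Unset Printing Implicit Defensive.
Import GRing.Theory.
Local Open Scope ring_scope.

Section Defs.
Variables (k : fieldType) (gT : finGroupType).

(* The group algebra kG (G = the whole finite group gT): coefficient functions. *)
Local Notation grpalg := {ffun gT -> k}.
(* kG (x) kG, identified with k[G x G]: coefficient functions on pairs. *)
Local Notation tens := {ffun gT * gT -> k}.

Definition tpure (a b : grpalg) : tens := [ffun p => a p.1 * b p.2].
Definition tmul (a b : tens) : tens :=
  [ffun p : gT * gT => \sum_(u : gT * gT)
      a u * b ((u.1^-1 * p.1)%g, (u.2^-1 * p.2)%g)].
Definition tone : tens := [ffun p => ((p == (1%g, 1%g)) : nat)%:R].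
Definition Delta (h : gT) : tens := [ffun p => ((p == (h, h)) : nat)%:R].

(* linear characters of the subgroup H (values k^x), extended by 0 off H *)
Definition is_char (H : {set gT}) (f : grpalg) : bool :=
  [forall x, (x \notin H) ==> (f x == 0)] && (f 1%g == 1) &&
  [forall x in H, forall y in H, f (x * y)%g == f x * f y].
Definition char_one (H : {set gT}) : grpalg := [ffun x => ((x \in H) : nat)%:R].
Definition char_mul (a b : grpalg) : grpalg := [ffun x => a x * b x].

Definition echi (H : {set gT}) (chi : grpalg) : grpalg :=
  [ffun x => if x \in H then (#|H|%:R)^-1 * chi (x^-1)%g else 0].

(* 2-cocycle on \hat H, where X enumerates \hat H *)
Definition cocycle2 (X : seq grpalg) (w : grpalg -> grpalg -> k) : Prop :=
  (forall a b, a \in X -> b \in X -> w a b != 0) /\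
  (forall a b c, a \in X -> b \in X -> c \in X ->
     w a b * w (char_mul a b) c = w b c * w a (char_mul b c)).

Definition omega_regular (X : seq grpalg) (w : grpalg -> grpalg -> k) (chi : grpalg) :=
  forall psi, psi \in X -> w chi psi = w psi chi.

Definition nondeg_cocycle (H : {set gT}) (X : seq grpalg) (w : grpalg -> grpalg -> k) :=
  forall chi, chi \in X -> omega_regular X w chi -> chi = char_one H.

Definition twistJ (H : {set gT}) (X : seq grpalg) (w : grpalg -> grpalg -> k) : tens :=
  [ffun p => \sum_(a <- X) \sum_(b <- X) w a b * tpure (echi H a) (echi H b) p].

Definition DeltaJ (J Jinv : tens) (h : gT) : tens := tmul (tmul Jinv (Delta h)) J.

(* A^* = functionals on kG = coefficient functions on G; product dual to Delta^J *)
Definition dmul (J Jinv : tens) (f g : grpalg) : grpalg :=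
  [ffun h => \sum_(p : gT * gT) DeltaJ J Jinv h p * (f p.1 * g p.2)].

(* group-like elements of A^*: Delta_{A^*} f = f (x) f and eps(f) = f(1) = 1,
   i.e. algebra maps kG -> k *)
Definition grouplike_dual (f : grpalg) : Prop :=
  f 1%g = 1 /\ forall x y, f (x * y)%g = f x * f y.

Definition central_dual (J Jinv : tens) (f : grpalg) : Prop :=
  forall g, dmul J Jinv f g = dmul J Jinv g f.

End Defs.

(* Main.v *)
Require Import Defs.
From HB Require Import structures.
From mathcomp Require Import all_boot all_order all_algebra all_fingroup all_solvable.
From mathcomp Require Import all_field all_character.
From mathcomp Require Import ring.
Import GRing.Theory.
Set Implicit Arguments. Unset Strict Implicit. Unset Printing Implicit Defensive.
Local Open Scope ring_scope.
Section GA.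
Variables (k : fieldType) (gT : finGroupType).
Local Notation ga := {ffun gT -> k}.

Definition gmul (a b : ga) : ga := [ffun x => \sum_y a y * b (y^-1 * x)%g].
Definition gd (x : gT) : ga := [ffun y => ((y == x) : nat)%:R].

Lemma gmulE (a b : ga) x : gmul a b x = \sum_y a y * b (y^-1 * x)%g.
Proof. by rewrite ffunE. Qed.

Lemma gsE' (x : gT) y : gd x y = ((y == x) : nat)%:R.
Proof. by rewrite ffunE. Qed.

Lemma gmulA (a b c : ga) : gmul (gmul a b) c = gmul a (gmul b c).
Proof.
apply/ffunP=> x; rewrite !ffunE.
under eq_bigr do rewrite ffunE big_distrl /=.
rewrite exchange_big /=; apply: eq_bigr => z _.
rewrite [gmul b c]/gmul ffunE big_distrr /=.
rewrite (reindex_inj (mulgI z)) /=; apply: eq_bigr => t _.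
by rewrite mulKg mulrA invMg mulgA.
Qed.

Lemma gmul1l (a : ga) : gmul (gd 1) a = a.
Proof.
apply/ffunP=> x; rewrite ffunE (bigD1 1%g) //= big1 ?addr0.
  by rewrite ffunE eqxx mul1r invg1 mul1g.
by move=> y /negbTE ny; rewrite ffunE ny mul0r.
Qed.

Lemma gmul1r (a : ga) : gmul a (gd 1) = a.
Proof.
apply/ffunP=> x; rewrite ffunE (bigD1 x) //= big1 ?addr0.
  by rewrite ffunE mulVg eqxx mulr1.
move=> y ny; rewrite ffunE.
have -> : ((y^-1 * x)%g == 1%g) = false.
  apply/negbTE; apply: contra ny => /eqP h; apply/eqP.
  by rewrite -[x](mulKVg y) h mulg1.
by rewrite mulr0.
Qed.

Lemma gmul_dl (x : gT) (a : ga) : gmul (gd x) a = [ffun y => a (x^-1 * y)%g].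
Proof.
apply/ffunP=> y; rewrite !ffunE (bigD1 x) //= big1 ?addr0.
  by rewrite ffunE eqxx mul1r.
by move=> z /negbTE nz; rewrite ffunE nz mul0r.
Qed.

Lemma gmul_dr (x : gT) (a : ga) : gmul a (gd x) = [ffun y => a (y * x^-1)%g].
Proof.
apply/ffunP=> y; rewrite !ffunE (bigD1 (y * x^-1)%g) //= big1 ?addr0.
  by rewrite ffunE invMg invgK mulgKV eqxx mulr1.
move=> z nz; rewrite ffunE.
have -> : ((z^-1 * y)%g == x) = false.
  apply/negbTE; apply: contra nz => /eqP <-.
  by rewrite invMg invgK mulKVg.
by rewrite mulr0.
Qed.

End GA.
Section TS.
Variables (k : fieldType) (gT : finGroupType).
Local Notation ga := {ffun gT -> k}.
Local Notation tens := {ffun gT * gT -> k}.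

Definition gs (c : k) (a : ga) : ga := [ffun y => c * a y].
Definition lc (f : ga) (t : tens) : ga := [ffun y => \sum_x t (x, y) * f x].
Definition swapt (t : tens) : tens := [ffun p => t (p.2, p.1)].
Definition mult (f : ga) := forall x y, f (x * y)%g = f x * f y.

Lemma lcE (f : ga) (t : tens) y : lc f t y = \sum_x t (x, y) * f x.
Proof. by rewrite ffunE. Qed.

Lemma swaptE (t : tens) x y : swapt t (x, y) = t (y, x).
Proof. by rewrite ffunE. Qed.

Lemma gsE c (a : ga) y : gs c a y = c * a y.
Proof. by rewrite ffunE. Qed.

Lemma sum_pair (I J : finType) (F : I * J -> k) :
  \sum_u F u = \sum_a \sum_b F (a, b).
Proof. by rewrite pair_bigA; apply: eq_bigr; case. Qed.

Lemma gmulZl c (a b : ga) : gmul (gs c a) b = gs c (gmul a b).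
Proof.
apply/ffunP=> x; rewrite !ffunE big_distrr /=; apply: eq_bigr=> y _.
by rewrite ffunE mulrA.
Qed.

Lemma gmulZr c (a b : ga) : gmul a (gs c b) = gs c (gmul a b).
Proof.
apply/ffunP=> x; rewrite !ffunE big_distrr /=; apply: eq_bigr=> y _.
by rewrite ffunE mulrCA.
Qed.

Lemma lc_tmul (f : ga) (s t : tens) : mult f -> lc f (tmul s t) = gmul (lc f s) (lc f t).
Proof.
move=> fM; apply/ffunP=> y; rewrite /gmul /lc !ffunE.
under eq_bigr do rewrite ffunE big_distrl /=.
rewrite exchange_big sum_pair exchange_big /=; apply: eq_bigr => b _.
rewrite ffunE big_distrl /=; apply: eq_bigr => a _.
rewrite ffunE big_distrr /=.
rewrite (reindex_inj (mulgI a)) /=; apply: eq_bigr => x _.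
by rewrite mulKg fM -!mulrA; congr (_ * _); rewrite mulrCA.
Qed.

Lemma lc_tone (f : ga) : f 1%g = 1 -> lc f (tone k gT) = gd k 1%g.
Proof.
move=> f1; apply/ffunP=> y; rewrite !ffunE (bigD1 1%g) //= big1 ?addr0.
  by rewrite ffunE f1 mulr1 xpair_eqE eqxx.
by move=> x /negbTE nx; rewrite ffunE xpair_eqE nx mul0r.
Qed.

Lemma lc_Delta f h : lc f (Delta k h) = gs (f h) (gd k h).
Proof.
apply/ffunP=> y; rewrite !ffunE (bigD1 h) //= big1 ?addr0.
  by rewrite ffunE xpair_eqE eqxx /= mulrC.
by move=> x /negbTE nx; rewrite ffunE xpair_eqE nx mul0r.
Qed.

Lemma swapt_tmul s t : swapt (tmul s t) = tmul (swapt s) (swapt t).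
Proof.
apply/ffunP=> p; rewrite !ffunE.
have sw_inj : injective (fun u : gT * gT => (u.2, u.1)) by move=> [? ?] [? ?] [-> ->].
rewrite (reindex_inj sw_inj) /=; apply: eq_bigr => u _.
by rewrite !ffunE.
Qed.

Lemma swapt_Delta h : swapt (Delta k h) = Delta k h.
Proof. by apply/ffunP=> -[x y]; rewrite !ffunE !xpair_eqE andbC. Qed.

Lemma lc_DeltaJ f J Jinv h : mult f ->
  lc f (DeltaJ J Jinv h) = gs (f h) (gmul (gmul (lc f Jinv) (gd k h)) (lc f J)).
Proof.
move=> fM; rewrite /DeltaJ !lc_tmul // lc_Delta.
by rewrite gmulZr gmulZl.
Qed.

Lemma dmul_lc J Jinv f g h :
  dmul J Jinv f g h = \sum_y lc f (DeltaJ J Jinv h) y * g y.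
Proof.
rewrite ffunE sum_pair exchange_big /=; apply: eq_bigr => b _.
rewrite /lc ffunE big_distrl /=; apply: eq_bigr => a _.
by rewrite mulrA.
Qed.

Lemma dmul_rc J Jinv f g h :
  dmul J Jinv g f h = \sum_y lc f (swapt (DeltaJ J Jinv h)) y * g y.
Proof.
rewrite ffunE sum_pair; apply: eq_bigr.
move=> a _.
rewrite lcE big_distrl /=; apply: eq_bigr => b _.
by rewrite swaptE /= [g a * _]mulrC mulrA.
Qed.

Lemma sum_gd (a : ga) t : \sum_y a y * gd k t y = a t.
Proof.
rewrite (bigD1 t) //= big1 ?addr0; first by rewrite ffunE eqxx mulr1.
by move=> y /negbTE ny; rewrite ffunE ny mulr0.
Qed.

Lemma central_lc J Jinv f : mult f ->
  central_dual J Jinv f <->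
  (forall h, lc f (DeltaJ J Jinv h) = lc f (DeltaJ (swapt J) (swapt Jinv) h)).
Proof.
move=> fM; split.
  move=> C h; apply/ffunP=> t.
  have := C (gd k t); move/ffunP/(_ h).
  rewrite dmul_lc dmul_rc !sum_gd => ->.
  by rewrite /DeltaJ !swapt_tmul swapt_Delta.
move=> E g; apply/ffunP=> h; rewrite dmul_lc dmul_rc E.
by rewrite /DeltaJ !swapt_tmul swapt_Delta.
Qed.

End TS.
Section Chars.
Variables (k : fieldType) (gT : finGroupType) (H : {group gT}).
Hypothesis Hc : [pchar k] =i pred0.
Local Notation ga := {ffun gT -> k}.

Lemma natr_neq0 n : (0 < n)%N -> (n%:R : k) != 0.
Proof. by move=> n0; rewrite (proj1 (pcharf0P k) Hc) -lt0n. Qed.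

Lemma cardH_neq0 : (#|H|%:R : k) != 0.
Proof. by rewrite natr_neq0 ?cardG_gt0. Qed.

Section OneChar.
Variable a : ga.
Hypothesis Ha : is_char H a.

Lemma char_out x : x \notin H -> a x = 0.
Proof. by case/andP: Ha => /andP[/forallP P _] _ xH; apply/eqP; exact: (implyP (P x)). Qed.

Lemma char1 : a 1%g = 1.
Proof. by case/andP: Ha => /andP[_ /eqP]. Qed.

Lemma charM x y : x \in H -> y \in H -> a (x * y)%g = a x * a y.
Proof. by case/andP: Ha => _ /forall_inP P xH yH; apply/eqP; exact: (forall_inP (P x xH) y yH). Qed.

Lemma charV x : x \in H -> a x^-1%g * a x = 1.
Proof. by move=> xH; rewrite -charM ?groupV // mulVg char1. Qed.

Lemma char_neq0 x : x \in H -> a x != 0.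
Proof. by move=> xH; apply/eqP=> a0; have := charV xH; rewrite a0 mulr0 => /eqP; rewrite eq_sym oner_eq0. Qed.

End OneChar.

Lemma sum_mult0 (mu : gT -> k) y :
  (forall x z, x \in H -> z \in H -> mu (x * z)%g = mu x * mu z) ->
  y \in H -> mu y != 1 -> \sum_(x in H) mu x = 0.
Proof.
move=> muM yH muy.
have E : \sum_(x in H) mu x = mu y * \sum_(x in H) mu x.
  rewrite {1}(reindex_inj (mulgI y)) /= big_distrr /=.
  apply: eq_big => [x|x xH]; first by rewrite groupMl.
  by rewrite muM // -(groupMl x yH).
move: E; set S := \sum_(x in H) mu x => E.
have : (1 - mu y) * S = 0 by rewrite mulrBl mul1r -E subrr.
by move/eqP; rewrite mulf_eq0 subr_eq0 eq_sym (negbTE muy) /= => /eqP.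
Qed.

Lemma char_ortho (a c : ga) : is_char H a -> is_char H c ->
  \sum_(x in H) a x^-1%g * c x = if a == c then (#|H|%:R : k) else 0.
Proof.
move=> Ha Hc'; case: eqP => [<-|ne].
  rewrite (eq_bigr (fun _ => 1)) ?sumr_const // => x xH.
  by rewrite charV.
case: (pickP [pred y | (y \in H) && (a y != c y)]) => [y /andP[yH ay] | P]; last first.
  exfalso; apply: ne; apply/ffunP=> x; have [xH|xH] := boolP (x \in H).
    by have := P x; rewrite /= xH /= => /negbFE/eqP.
  by rewrite !char_out.
apply: (sum_mult0 (mu := fun x => a x^-1%g * c x) (y := y)) => //.
  move=> x z xH zH; rewrite invMg (charM Ha) ?groupV // (charM Hc') //.
  by rewrite [a z^-1%g * _]mulrC mulrACA.
apply: contra ay => /eqP E; apply/eqP.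
by rewrite -[a y]mulr1 -E mulrA [a y * _]mulrC (charV Ha yH) mul1r.
Qed.

End Chars.

Section More.
Variables (k : fieldType) (gT : finGroupType) (H : {group gT}).
Hypothesis Hc : [pchar k] =i pred0.
Local Notation ga := {ffun gT -> k}.

Definition res (f : ga) : ga := [ffun x => if x \in H then f x else 0].

Lemma res_char (f : ga) : f 1%g = 1 -> mult f -> is_char H (res f).
Proof.
move=> f1 fM; apply/andP; split; [apply/andP; split|].
- by apply/forallP=> x; apply/implyP=> xH; rewrite ffunE (negbTE xH).
- by rewrite ffunE group1 f1.
- apply/forall_inP=> x xH; apply/forall_inP=> y yH.
  by rewrite !ffunE groupM // xH yH fM.
Qed.

Lemma echi_f (a f : ga) : is_char H a -> f 1%g = 1 -> mult f ->
  \sum_x echi H a x * f x = ((a == res f) : nat)%:R.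
Proof.
move=> Ha f1 fM.
transitivity (\sum_(x in H) (#|H|%:R : k)^-1 * (a x^-1%g * res f x)).
  rewrite [RHS]big_mkcond /=; apply: eq_bigr => x _; rewrite !ffunE.
  by case: ifP => xH; [rewrite mulrA | rewrite mul0r].
rewrite -big_distrr /= (char_ortho Ha (res_char f1 fM)).
by case: eqP => _ /=; [rewrite mulVf ?cardH_neq0 | rewrite mulr0].
Qed.

Lemma echi_mul (a b : ga) : is_char H a -> is_char H b ->
  gmul (echi H a) (echi H b) = gs ((a == b) : nat)%:R (echi H a).
Proof.
move=> Ha Hb; apply/ffunP=> x; rewrite !ffunE.
have [xH|xH] := boolP (x \in H); last first.
  rewrite mulr0 big1 // => y _; rewrite !ffunE.
  case: ifP => yH; last by rewrite mul0r.
  by rewrite groupMl ?groupV // (negbTE xH) mulr0.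
transitivity (\sum_(y in H) ((#|H|%:R : k)^-1 * (#|H|%:R)^-1 * b x^-1%g) * (a y^-1%g * b y)).
  rewrite [RHS]big_mkcond; apply: eq_bigr => y _; rewrite !ffunE.
  case: ifP => yH; last by rewrite mul0r.
  rewrite groupMl ?groupV // xH invMg invgK (charM Hb) ?groupV //.
  ring.
rewrite -big_distrr /= (char_ortho Ha Hb).
case: eqP => [->|_]; last by rewrite !mulr0 mul0r.
have nz : (#|H|%:R : k) != 0 by exact: cardH_neq0.
rewrite (_ : ((true : nat)%:R : k) = 1) //.
by field.
Qed.

End More.
Section Main.
Variables (k : fieldType) (gT : finGroupType) (H : {group gT}).
Hypothesis Hc : [pchar k] =i pred0.
Local Notation ga := {ffun gT -> k}.
Variable X : seq ga.
Hypothesis HXu : uniq X.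
Hypothesis HX : forall f, (f \in X) = is_char H f.

Definition comb (c : ga -> k) : ga := [ffun y => \sum_(b <- X) c b * echi H b y].

Lemma combE c y : comb c y = \sum_(b <- X) c b * echi H b y.
Proof. by rewrite ffunE. Qed.

Lemma comb_eq c d : {in X, c =1 d} -> comb c = comb d.
Proof. by move=> E; apply/ffunP=> y; rewrite !combE; apply: eq_big_seq => b bX; rewrite E. Qed.

Lemma combZ c d : comb (fun b => c * d b) = gs c (comb d).
Proof.
by apply/ffunP=> y; rewrite gsE !combE big_distrr /=; apply: eq_bigr => b _; rewrite mulrA.
Qed.

Lemma comb_mul c d : gmul (comb c) (comb d) = comb (fun b => c b * d b).
Proof.
apply/ffunP=> x; rewrite gmulE [RHS]combE.
transitivity (\sum_(a <- X) \sum_(b <- X) c a * d b * gmul (echi H a) (echi H b) x).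
  under eq_bigr do rewrite !combE big_distrl /=.
  rewrite exchange_big /=; apply: eq_bigr => a _.
  under eq_bigr do rewrite big_distrr /=.
  rewrite exchange_big /=; apply: eq_bigr => b _.
  rewrite gmulE big_distrr /=; apply: eq_bigr => y _; ring.
apply: eq_big_seq => a aX.
rewrite (bigD1_seq a) //= big1_seq ?addr0.
  by rewrite echi_mul -?HX // ffunE eqxx mul1r.
move=> b /andP[ba bX]; rewrite echi_mul -?HX // ffunE eq_sym (negbTE ba).
by rewrite mul0r mulr0.
Qed.

Lemma lc_twist (f : ga) (w' : ga -> ga -> k) : f 1%g = 1 -> mult f ->
  lc f (twistJ H X w') = comb (fun b => w' (res H f) b).
Proof.
move=> f1 fM; have rX : res H f \in X by rewrite HX res_char.
apply/ffunP=> y; rewrite lcE combE.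
transitivity (\sum_(a <- X) (\sum_x echi H a x * f x) * \sum_(b <- X) w' a b * echi H b y).
  under eq_bigr do rewrite ffunE big_distrl /=.
  rewrite exchange_big /=; apply: eq_bigr => a _.
  rewrite big_distrl /=; apply: eq_bigr => x _.
  rewrite big_distrl big_distrr /=; apply: eq_bigr => b _.
  rewrite ffunE; ring.
rewrite (bigD1_seq (res H f) rX HXu) /= (echi_f Hc) -?HX // eqxx mul1r.
rewrite [X in _ + X]big1_seq ?addr0 //.
move=> a /andP[ba aX]; rewrite echi_f -?HX // (negbTE ba).
by rewrite mul0r.
Qed.

Lemma swapt_twist (w' : ga -> ga -> k) :
  swapt (twistJ H X w') = twistJ H X (fun a b => w' b a).
Proof.
apply/ffunP=> -[x y]; rewrite swaptE !ffunE exchange_big /=.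
apply: eq_bigr => a _; apply: eq_bigr => b _; rewrite !ffunE /=; ring.
Qed.


Lemma one_char : is_char H (char_one k H).
Proof.
apply/andP; split; [apply/andP; split|].
- by apply/forallP=> x; apply/implyP=> xH; rewrite ffunE (negbTE xH).
- by rewrite ffunE group1.
- apply/forall_inP=> x xH; apply/forall_inP=> y yH.
  by rewrite !ffunE groupM // xH yH mulr1.
Qed.

Lemma oneX : char_one k H \in X.
Proof. by rewrite HX one_char. Qed.

Lemma char_mulC (a b : ga) : char_mul a b = char_mul b a.
Proof. by apply/ffunP=> x; rewrite !ffunE mulrC. Qed.

Lemma char_mul_char a b : a \in X -> b \in X -> char_mul a b \in X.
Proof.
rewrite !HX => Ha Hb; apply/andP; split; [apply/andP; split|].
- by apply/forallP=> x; apply/implyP=> xH; rewrite ffunE (char_out Ha xH) mul0r.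
- by rewrite ffunE (char1 Ha) (char1 Hb) mulr1.
- apply/forall_inP=> x xH; apply/forall_inP=> y yH.
  by rewrite !ffunE (charM Ha) // (charM Hb) //; apply/eqP; ring.
Qed.

Lemma char_mul1 a : a \in X -> char_mul (char_one k H) a = a.
Proof.
rewrite HX => Ha; apply/ffunP=> x; rewrite !ffunE.
have [xH|xH] := boolP (x \in H); first by rewrite /= mulr1n mul1r.
by rewrite /= mulr0n mul0r (char_out Ha).
Qed.

Variable w : ga -> ga -> k.
Hypothesis Hw : cocycle2 X w.

Local Notation one := (char_one k H).

Lemma w_nz a b : a \in X -> b \in X -> w a b != 0.
Proof. by case: Hw => P _; apply: P. Qed.

Lemma w_coc a b c : a \in X -> b \in X -> c \in X ->
  w a b * w (char_mul a b) c = w b c * w a (char_mul b c).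
Proof. by case: Hw => _ P; apply: P. Qed.

Lemma w1l b : b \in X -> w one b = w one one.
Proof.
move=> bX; have := w_coc oneX oneX bX.
rewrite !char_mul1 ?oneX // => /(mulIf (w_nz oneX bX)).
by move=> ->.
Qed.

Lemma w1r b : b \in X -> w b one = w one one.
Proof.
move=> bX; have := w_coc bX oneX oneX.
rewrite char_mulC char_mul1 // char_mul1 ?oneX //.
by move=> /(mulIf (w_nz bX oneX)).
Qed.

Definition lam (chi : ga) (b : ga) := w b chi / w chi b.

Lemma lamM chi a b : chi \in X -> a \in X -> b \in X ->
  lam chi (char_mul a b) = lam chi a * lam chi b.
Proof.
move=> cX aX bX; rewrite /lam.
have abX := char_mul_char aX bX.
have e1 := w_coc aX bX cX.
have e2 := w_coc cX aX bX.
have e3 := w_coc aX cX bX.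
rewrite [char_mul a chi]char_mulC in e3.
rewrite [char_mul b chi]char_mulC in e1.
have n1 := w_nz aX bX. have n2 := w_nz cX aX. have n3 := w_nz cX bX.
have n4 := w_nz aX cX. have n5 := w_nz bX cX. have n6 := w_nz cX abX.
have n7 := w_nz (char_mul_char cX aX) bX.
have E1 : w (char_mul a b) chi = w b chi * w a (char_mul chi b) / w a b.
  by rewrite -e1; field.
have E2 : w chi (char_mul a b) = w chi a * w (char_mul chi a) b / w a b.
  by rewrite e2; field.
have E3 : w a (char_mul chi b) = w a chi * w (char_mul chi a) b / w chi b.
  by rewrite e3; field.
rewrite E1 E2 E3; field.
by rewrite n7 n2 n3 n1.
Qed.


Variable Jinv : {ffun gT * gT -> k}.
Local Notation J := (twistJ H X w).
Hypothesis HJ1 : tmul J Jinv = tone k gT.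
Hypothesis HJ2 : tmul Jinv J = tone k gT.

Lemma swapt_tone : swapt (tone k gT) = tone k gT.
Proof. by apply/ffunP=> -[x y]; rewrite swaptE !ffunE !xpair_eqE andbC. Qed.

Lemma inv_l (f : ga) : f 1%g = 1 -> mult f -> gmul (lc f Jinv) (lc f J) = gd k 1%g.
Proof. by move=> f1 fM; rewrite -lc_tmul // HJ2 lc_tone. Qed.

Lemma inv_r (f : ga) : f 1%g = 1 -> mult f -> gmul (lc f J) (lc f Jinv) = gd k 1%g.
Proof. by move=> f1 fM; rewrite -lc_tmul // HJ1 lc_tone. Qed.

Lemma sinv_l (f : ga) : f 1%g = 1 -> mult f ->
  gmul (lc f (swapt Jinv)) (lc f (swapt J)) = gd k 1%g.
Proof. by move=> f1 fM; rewrite -lc_tmul // -swapt_tmul HJ2 swapt_tone lc_tone. Qed.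

Lemma sinv_r (f : ga) : f 1%g = 1 -> mult f ->
  gmul (lc f (swapt J)) (lc f (swapt Jinv)) = gd k 1%g.
Proof. by move=> f1 fM; rewrite -lc_tmul // -swapt_tmul HJ1 swapt_tone lc_tone. Qed.

Definition f1 : ga := [ffun _ => 1].

Lemma f1_1 : f1 1%g = 1. Proof. by rewrite ffunE. Qed.
Lemma f1M : mult f1. Proof. by move=> x y; rewrite !ffunE mulr1. Qed.

Lemma res_one (f : ga) : (forall x, x \in H -> f x = 1) -> res H f = one.
Proof.
move=> P; apply/ffunP=> x; rewrite !ffunE.
by have [xH|xH] := boolP (x \in H); rewrite /= ?P // ?mulr1n ?mulr0n.
Qed.

Lemma EE : gmul (comb (fun _ => 1)) (comb (fun _ => 1)) = comb (fun _ => 1).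
Proof. by rewrite comb_mul; apply: comb_eq => b _; rewrite mulr1. Qed.

Lemma E_one : comb (fun _ => 1) = gd k 1%g.
Proof.
have u_E : lc f1 J = gs (w one one) (comb (fun _ => 1)).
  rewrite lc_twist ?f1_1 //; last exact: f1M.
  rewrite res_one; last by move=> x _; rewrite ffunE.
  by rewrite -combZ; apply: comb_eq => b bX; rewrite w1l // mulr1.
have inv := inv_l f1_1 f1M; rewrite u_E in inv.
have : gmul (gmul (lc f1 Jinv) (gs (w one one) (comb (fun _ => 1)))) (comb (fun _ => 1))
       = gmul (lc f1 Jinv) (gs (w one one) (comb (fun _ => 1))).
  by rewrite gmulA gmulZl EE.
by rewrite inv gmul1l.
Qed.

Lemma sep x : x \in H -> (forall b, b \in X -> b x = 1) -> x = 1%g.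
Proof.
move=> xH P; have := congr1 (fun t : ga => t x^-1%g) E_one.
rewrite combE ffunE /=.
rewrite (eq_big_seq (fun _ => (#|H|%:R : k)^-1)); last first.
  by move=> b bX; rewrite ffunE groupV xH invgK P // mulr1 mul1r.
rewrite -[\sum_(b <- X) _]mulr1 big_distrl /= -big_distrr /=.
rewrite (eq_big_seq (fun _ => 1%:R)) // -natr_sum sum1_size.
have sX : (0 < size X)%N by case: X oneX.
case: eqP => [/eqP|_]; first by rewrite eq_invg1 => /eqP.
move/eqP; rewrite mulf_eq0 invr_eq0 (negbTE (cardH_neq0 _ Hc)) /=.
by rewrite (negbTE (natr_neq0 Hc sX)).
Qed.


Lemma scalar_conj (u u' : ga) c h : c != 0 -> u = gs c (gd k 1%g) ->
  gmul u' u = gd k 1%g -> gmul (gmul u' (gd k h)) u = gd k h.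
Proof.
move=> c0 -> inv.
have u'E : u' = gs c^-1 (gd k 1%g).
  rewrite gmulZr gmul1r in inv.
  apply/ffunP=> y; rewrite gsE -inv gsE mulrA (mulVf c0) mul1r //.
rewrite u'E gmulZl gmul1l gmulZr gmulZl gmul1r.
by apply/ffunP=> y; rewrite !gsE mulrA (mulfV c0) mul1r.
Qed.

Lemma converse (f : ga) : f 1%g = 1 -> mult f -> (forall x, x \in H -> f x = 1) ->
  central_dual J Jinv f.
Proof.
move=> f1' fM P; apply/central_lc => // h.
rewrite !lc_DeltaJ //; congr (gs _ _).
have c0 := w_nz oneX oneX.
rewrite (@scalar_conj (lc f J) _ (w one one)) //; last exact: inv_l.
  rewrite (@scalar_conj (lc f (swapt J)) _ (w one one)) //; last exact: sinv_l.
  rewrite swapt_twist lc_twist // res_one // -E_one -combZ.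
  by apply: comb_eq => b bX; rewrite w1r // mulr1.
rewrite lc_twist // res_one // -E_one -combZ.
by apply: comb_eq => b bX; rewrite w1l // mulr1.
Qed.


Lemma forward (f : ga) : f 1%g = 1 -> mult f -> central_dual J Jinv f ->
  nondeg_cocycle H X w -> ('Z([set: gT]) = 1)%g -> forall x, x \in H -> f x = 1.
Proof.
move=> f1' fM C Hnd HZ.
have cX : res H f \in X by rewrite HX res_char.
set chi := res H f in cX *.
have fh0 : forall h, f h != 0.
  move=> h; apply/eqP=> f0; have := fM h h^-1%g; rewrite mulgV f1' f0 mul0r.
  by move/eqP; rewrite oner_eq0.
pose u := lc f J; pose u' := lc f Jinv; pose v := lc f (swapt J); pose v' := lc f (swapt Jinv).
pose ub := comb (fun b => (w chi b)^-1); pose vb := comb (fun b => (w b chi)^-1).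
have uE : u = comb (fun b => w chi b) by rewrite /u lc_twist.
have vE : v = comb (fun b => w b chi) by rewrite /v swapt_twist lc_twist.
have uub : gmul u ub = gd k 1%g.
  by rewrite uE comb_mul -E_one; apply: comb_eq => b bX; rewrite mulfV // w_nz.
have ubu : gmul ub u = gd k 1%g.
  by rewrite uE comb_mul -E_one; apply: comb_eq => b bX; rewrite mulVf // w_nz.
have vvb : gmul v vb = gd k 1%g.
  by rewrite vE comb_mul -E_one; apply: comb_eq => b bX; rewrite mulfV // w_nz.
have vbv : gmul vb v = gd k 1%g.
  by rewrite vE comb_mul -E_one; apply: comb_eq => b bX; rewrite mulVf // w_nz.
have u'E : u' = ub.
  by rewrite -[u']gmul1r -uub -gmulA /u' /u inv_l // gmul1l.
have v'E : v' = vb.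
  by rewrite -[v']gmul1r -vvb -gmulA /v' /v sinv_l // gmul1l.
have key : forall h, gmul (gmul ub (gd k h)) u = gmul (gmul vb (gd k h)) v.
  move=> h; have := (proj1 (@central_lc _ _ J Jinv f fM) C) h.
  rewrite !lc_DeltaJ // -/u -/u' -/v -/v' u'E v'E.
  move/ffunP => E; apply/ffunP => y; have := E y; rewrite !gsE.
  exact: (mulfI (fh0 h)).
have key2 : forall h t, gmul ub (gmul (gd k h) (gmul u t)) = gmul vb (gmul (gd k h) (gmul v t)).
  by move=> h t; have := congr1 (fun s => gmul s t) (key h); rewrite /= !gmulA.
pose W := comb (lam chi).
have WE : gmul v ub = W.
  by rewrite vE /ub comb_mul; apply: comb_eq => b _; rewrite /lam.
have Wc : forall h, gmul W (gd k h) = gmul (gd k h) W.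
  move=> h; rewrite -WE -[LHS]gmul1r -uub !gmulA key2.
  by rewrite -[gmul v (gmul vb _)]gmulA vvb gmul1l.
have Wconj : forall h x, W (h * x * h^-1)%g = W x.
  move=> h x; have := congr1 (fun t : ga => t (h * x)%g) (Wc h).
  by rewrite gmul_dr gmul_dl /= !ffunE mulKg.
have WuVb : gmul W (gmul u vb) = gd k 1%g.
  by rewrite -WE gmulA -[gmul ub (gmul u vb)]gmulA ubu gmul1l vvb.
have [x0 Wx0] : exists x0, W x0 != 0.
  case: (pickP (fun x => W x != 0)) => [x0 Hx0|P]; first by exists x0.
  exfalso; have := congr1 (fun t : ga => t 1%g) WuVb; rewrite gmulE ffunE eqxx big1.
    by move/eqP; rewrite eq_sym /= mulr1n oner_eq0.
  by move=> y _; move/negbFE/eqP: (P y) => ->; rewrite mul0r.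
have Wout : forall x, x \notin H -> W x = 0.
  by move=> x xH; rewrite combE big1_seq // => b _; rewrite ffunE (negbTE xH) mulr0.
have lamE : forall x, x \in H -> W x != 0 -> forall b, b \in X -> lam chi b = b x.
  move=> x xH Wx.
  pose mu := fun b => lam chi b * b x^-1%g.
  have muM : forall a b, a \in X -> b \in X -> mu (char_mul a b) = mu a * mu b.
    by move=> a b aX bX; rewrite /mu lamM // ffunE; ring.
  have Wsum : W x = (#|H|%:R)^-1 * \sum_(b <- X) mu b.
    rewrite combE big_distrr /=; apply: eq_big_seq => b bX.
    by rewrite ffunE xH /mu; ring.
  suff mu1 : forall b, b \in X -> mu b = 1.
    move=> b bX; have := mu1 b bX; rewrite /mu => E.
    have Hb : is_char H b by rewrite -HX.
    by rewrite -[lam chi b]mulr1 -(charV Hb xH) mulrA E mul1r.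
  move=> b0 b0X; apply/eqP; apply: contraR Wx => mub0.
  have inj : {in X &, injective (char_mul b0)}.
    move=> a a' aX a'X E; apply/ffunP => y; have := congr1 (fun t : ga => t y) E.
    rewrite /= !ffunE; have Hb0 : is_char H b0 by rewrite -HX.
    have [yH|yH] := boolP (y \in H); first exact: (mulfI (char_neq0 Hb0 yH)).
    have Ha : is_char H a by rewrite -HX.
    have Ha' : is_char H a' by rewrite -HX.
    by rewrite (char_out Ha yH) (char_out Ha' yH).
  have perm : perm_eq (map (char_mul b0) X) X.
    have U : uniq (map (char_mul b0) X) by rewrite map_inj_in_uniq.
    apply: uniq_perm => //.
    apply: (uniq_min_size U _ _).2; last by rewrite size_map.
    by move=> c /mapP[a aX ->]; exact: char_mul_char.
  have : \sum_(b <- X) mu b = mu b0 * \sum_(b <- X) mu b.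
    rewrite -{1}(perm_big X perm) big_map big_distrr /=.
    by apply: eq_big_seq => b bX; exact: muM.
  move=> E.
  have : (1 - mu b0) * (\sum_(b <- X) mu b) = 0 by rewrite mulrBl mul1r -E subrr.
  move/eqP; rewrite mulf_eq0 subr_eq0 eq_sym (negbTE mub0) /= => /eqP S0.
  by rewrite Wsum S0 mulr0.
have x0H : x0 \in H by apply: contraR Wx0 => /Wout ->.
have x0Z : x0 \in 'Z([set: gT])%g.
  apply/centerP; split; first by rewrite inE.
  move=> h _.
  have W1 : W (h * x0 * h^-1)%g != 0 by rewrite Wconj.
  have x1H : (h * x0 * h^-1)%g \in H by apply: contraR W1 => /Wout ->.
  have E : x0 = (h * x0 * h^-1)%g.
    apply/eqP; rewrite eq_mulgV1; apply/eqP; apply: sep; first by rewrite groupM ?groupV.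
    move=> b bX; have Hb : is_char H b by rewrite -HX.
    rewrite (charM Hb) ?groupV // -(lamE _ x0H Wx0 b bX) (lamE _ x1H W1 b bX).
    by rewrite mulrC (charV Hb x1H).
  by rewrite /commute {1}E mulgKV.
have x01 : x0 = 1%g by move: x0Z; rewrite HZ => /set1P.
have reg : omega_regular X w chi.
  move=> psi psiX; have := lamE _ x0H Wx0 psi psiX.
  have Hpsi : is_char H psi by rewrite -HX.
  rewrite x01 (char1 Hpsi) /lam => E.
  by rewrite -[w psi chi](divfK (w_nz cX psiX)) E mul1r.
have chi1 := Hnd chi cX reg.

move=> x xH; have := congr1 (fun t : ga => t x) chi1.
by rewrite /chi !ffunE xH /= mulr1n.
Qed.

End Main.
Section Rank.
Variables (k : fieldType) (gT : finGroupType) (K : {group gT}).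
Hypothesis Hc : [pchar k] =i pred0.
Local Notation ga := {ffun gT -> k}.
Variable L : seq ga.
Hypothesis HLu : uniq L.
Hypothesis HL1 : forall f, f \in L -> f 1%g = 1.
Hypothesis HLM : forall f, f \in L -> mult f.
Hypothesis HLK : forall f, f \in L -> forall x, x \in K -> f x = 1.

Lemma sum_enum (T : finType) (F : T -> k) : \sum_(j < #|T|) F (enum_val j) = \sum_x F x.
Proof.
rewrite (reindex enum_rank) /=; first by apply: eq_bigr => x _; rewrite enum_rankK.
by exists enum_val => ?; [rewrite enum_rankK | rewrite enum_valK].
Qed.

Lemma homV (f : ga) x : f \in L -> f x * f x^-1%g = 1.
Proof. by move=> fL; rewrite -(HLM fL) mulgV HL1. Qed.

Lemma hom_neq0 (f : ga) x : f \in L -> f x != 0.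
Proof. by move=> fL; apply/eqP=> f0; have := homV x fL; rewrite f0 mul0r => /eqP; rewrite eq_sym oner_eq0. Qed.

Lemma hom_ortho (f g : ga) : f \in L -> g \in L ->
  \sum_x f x * (g x)^-1 = if f == g then (#|gT|%:R : k) else 0.
Proof.
move=> fL gL; case: eqP => [<-|ne].
  rewrite (eq_bigr (fun _ => 1)) ?sumr_const.
    by [].
  by move=> x _; rewrite mulfV // hom_neq0.
case: (pickP [pred y | f y != g y]) => [y /= fy | P]; last first.
  by exfalso; apply: ne; apply/ffunP=> x; have := P x; rewrite /= => /negbFE/eqP.
have := @sum_mult0 k gT [set: gT]%G (fun x => f x * (g x)^-1) y.
rewrite inE; move/(_ _ isT) => S.
transitivity (\sum_(x in [set: gT]) f x * (g x)^-1).
  by apply: eq_bigl => x; rewrite inE.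
apply: S.
- by move=> x z _ _; rewrite (HLM fL) (HLM gL) invfM; ring.
- apply: contra fy => /eqP E; apply/eqP.
  by rewrite -[g y]mulr1 -E mulrCA mulfV ?mulr1 // hom_neq0.
Qed.


Lemma rank_bound : (size L <= #|[set: gT] : K|%g)%N.
Proof.
set n := size L; set Q := rcosets K [set: gT].
pose M := \matrix_(i < n, j < #|gT|) L`_i (enum_val j).
pose N := \matrix_(j < #|gT|, i < n) ((#|gT|%:R : k)^-1 * (L`_i (enum_val j))^-1).
pose M' := \matrix_(i < n, j < #|Q|) L`_i (repr (enum_val j)).
pose P := \matrix_(j < #|Q|, j' < #|gT|) (((enum_val j' \in enum_val j) : nat)%:R : k).
have MN : M *m N = 1%:M.
  apply/matrixP=> i i'; rewrite !mxE.
  transitivity ((#|gT|%:R : k)^-1 * \sum_x L`_i x * (L`_i' x)^-1).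
    rewrite big_distrr /= -(sum_enum (fun x => (#|gT|%:R : k)^-1 * (L`_i x * (L`_i' x)^-1))).
    by apply: eq_bigr => j _; rewrite !mxE; ring.
  rewrite hom_ortho ?mem_nth // nth_uniq //.
  have nz : (#|gT|%:R : k) != 0 by rewrite (proj1 (pcharf0P k) Hc) -lt0n (cardD1 1%g).
  case: (eqVneq i i') => [<-|ne]; first by rewrite eqxx /= mulVf.
  by rewrite val_eqE (negbTE ne) mulr0.
have MP : M = M' *m P.
  apply/matrixP=> i j; rewrite !mxE.
  under eq_bigr do rewrite !mxE.
  set x := enum_val j.
  rewrite -(big_enum_val (fun q => L`_i (repr q) * ((x \in q) : nat)%:R)).
  have xQ : (K :* x)%g \in Q by apply/rcosetsP; exists x; rewrite ?inE.
  rewrite (bigD1 ((K :* x)%g)) //= big1 ?addr0.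
    rewrite rcoset_refl mulr1.
    have /rcosetP[a aK ->] := mem_repr_rcoset K x.
    by rewrite (HLM (mem_nth 0 (ltn_ord i))) (HLK (mem_nth 0 (ltn_ord i)) aK) mul1r.
  move=> q /andP[/rcosetsP[y _ ->] ne].
  case: (boolP (x \in (K :* y)%g)) => [/rcoset_eqP E|_]; last by rewrite mulr0.
  by rewrite E eqxx in ne.
have : (n <= \rank M')%N.
  apply: leq_trans (mxrankM_maxl M' P).
  rewrite -MP -{1}(mxrank1 k n) -MN.
  exact: mxrankM_maxl.
move/leq_trans; apply; exact: rank_leq_col.
Qed.

End Rank.
Section Lower.
Variables (k : closedFieldType) (gT : finGroupType) (K : {group gT}).
Hypothesis Hc : [pchar k] =i pred0.
Local Notation ga := {ffun gT -> k}.

Lemma prim_k n : (0 < n)%N -> {z : k | n.-primitive_root z}.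
Proof.
pose p : {poly k} := 'X^n - 1; have [r Dp] := closed_field_poly_normal p.
move=> n_gt0; apply/sigW; rewrite (monicP _) ?monicXnsubC // scale1r in Dp.
have rn1: all n.-unity_root r by apply/allP=> z; rewrite -root_prod_XsubC -Dp.
have sz_r: (n < (size r).+1)%N.
  by rewrite -(size_prod_XsubC r id) -Dp size_XnsubC.
have [|z] := hasP (has_prim_root n_gt0 rn1 _ sz_r); last by exists z.
by rewrite -separable_prod_XsubC -Dp separable_Xn_sub_1 // natr_neq0.
Qed.

Definition phi n (zc : algC) (z : k) (c : algC) : k :=
  if [pick i : 'I_n | zc ^+ i == c] is Some i then z ^+ i else 0.

Lemma phi_exp n zc z i : n.-primitive_root zc -> n.-primitive_root z ->
  phi n zc z (zc ^+ i) = z ^+ i.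
Proof.
move=> pc pz; rewrite /phi; case: pickP => [j /eqP E | P].
  by apply/eqP; rewrite (eq_prim_root_expr pz) -(eq_prim_root_expr pc) E.
have n0 : (0 < n)%N by apply: prim_order_gt0 pc.
have := P (Ordinal (ltn_pmod i n0)); rewrite /= (prim_expr_mod pc) eqxx.
by [].
Qed.


Hypothesis Kn : (K <| [set: gT])%g.
Hypothesis Kab : abelian ([set: gT] / K)%g.
Variable L : seq ga.
Hypothesis HLin : forall f : ga, f 1%g = 1 -> mult f -> (forall x, x \in K -> f x = 1) -> f \in L.

Lemma lower_bound : (#|[set: gT] : K|%g <= size L)%N.
Proof.
pose Q := ([set: gT] / K)%G.
have n0 : (0 < #|gT|)%N by have := cardG_gt0 [set: gT]%G; rewrite cardsT.
have [zc pc] := C_prim_root_exists n0.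
have [z pz] := prim_k n0.
have Nall : forall x : gT, x \in 'N(K)%g.
  by move=> x; apply: (subsetP (normal_norm Kn)); rewrite inE.
have allQ : forall q : coset_of K, q \in Q.
  move=> q; case: (cosetP q) => x _ ->; apply: mem_quotient; by rewrite inE.
have lin : forall i : Iirr Q, 'chi_i \is a linear_char by apply/char_abelianP.
have root : forall (i : Iirr Q) q, exists e : nat, 'chi_i q = zc ^+ e.
  move=> i q; have u : 'chi_i q ^+ #|gT| = 1.
    have : (#[q]%g %| #|gT|)%N.
      apply: dvdn_trans (order_dvdG (allQ q)) _.
      rewrite card_quotient ?normal_norm // -cardsT; exact: dvdn_indexg.
    by case/dvdnP => m ->; rewrite mulnC exprM lin_char_unity_root ?allQ ?expr1n.
  have [e ->] := prim_rootP pc u; by exists e.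
pose F (i : Iirr Q) : ga := [ffun x => phi #|gT| zc z ('chi_i (coset K x))].
have phi1 : phi #|gT| zc z 1 = 1 by rewrite -(expr0 zc) phi_exp // expr0.
have FL : forall i, F i \in L.
  move=> i; apply: HLin.
  - by rewrite ffunE morph1 lin_char1.
  - move=> x y; rewrite !ffunE morphM ?Nall // lin_charM ?allQ //.
    have [a ->] := root i (coset K x); have [b ->] := root i (coset K y).
    by rewrite -exprD !phi_exp // exprD.
  - by move=> x xK; rewrite ffunE coset_id // lin_char1.
have Finj : injective F.
  move=> i j E; apply: irr_inj; apply/cfunP => q.
  have [x _ ->] := cosetP q.
  have := congr1 (fun f : ga => f x) E; rewrite /= !ffunE.
  have [a ->] := root i (coset K x); have [b ->] := root j (coset K x).
  rewrite !phi_exp // => /eqP; rewrite (eq_prim_root_expr pz) -(eq_prim_root_expr pc).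
  by move/eqP.
have le := @uniq_leq_size _ (map F (enum 'I_(Nirr Q))) L.
rewrite size_map size_enum_ord in le.
rewrite -card_quotient ?normal_norm // -(card_Iirr_abelian Kab) card_ord.
apply: le; first by rewrite map_inj_uniq ?enum_uniq.
by move=> f /mapP[i _ ->]; exact: FL.
Qed.

End Lower.
Local Close Scope ring_scope.
Theorem corollary3p2
  (k : closedFieldType) (Hchar : [pchar k]%R =i pred0)
  (gT : finGroupType) (HZ : ('Z([set: gT]) = 1)%g)
  (H : {group gT}) (Hab : abelian H)
  (X : seq {ffun gT -> k}) (HXu : uniq X) (HX : forall f, (f \in X) = is_char H f)
  (w : {ffun gT -> k} -> {ffun gT -> k} -> k)
  (Hw : cocycle2 X w) (Hnd : nondeg_cocycle H X w)
  (Jinv : {ffun gT * gT -> k})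
  (HJ1 : tmul (twistJ H X w) Jinv = tone k gT)
  (HJ2 : tmul Jinv (twistJ H X w) = tone k gT)
  (L : seq {ffun gT -> k}) (HLu : uniq L)
  (HL : forall f, f \in L <-> grouplike_dual f /\ central_dual (twistJ H X w) Jinv f) :
  (#|H| %| #|gT| %/ size L)%N.
Proof.
Local Open Scope ring_scope.
pose K := (H <*> ([set: gT]%G)^`(1))%G.
have sHK : H \subset K by apply: joing_subl.
have sDK : ([set: gT]%G)^`(1)%g \subset K by apply: joing_subr.
have Kn : (K <| [set: gT]%G)%g by apply: sub_der1_normal => //; apply: subsetT.
have Kab : abelian ([set: gT] / K)%g by apply: sub_der1_abelian.
have trivK : forall f : {ffun gT -> k}, f 1%g = 1 -> mult f ->
    (forall x, x \in H -> f x = 1) -> forall x, x \in K -> f x = 1.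
  move=> f f1 fM fH.
  have gs : group_set [set x | f x == 1].
    apply/group_setP; split; first by rewrite inE f1.
    by move=> x y; rewrite !inE => /eqP fx /eqP fy; rewrite fM fx fy mulr1.
  have : K \subset Group gs.
    rewrite join_subG; apply/andP; split.
      by apply/subsetP=> x xH; rewrite inE fH.
    rewrite derg1 gen_subG; apply/subsetP => _ /imset2P[x y _ _ ->].
    have fV : forall t, f t^-1%g * f t = 1 by move=> t; rewrite -fM mulVg f1.
    rewrite inE commgEl /conjg !fM.
    have -> : f x^-1%g * (f y^-1%g * (f x * f y)) = (f x^-1%g * f x) * (f y^-1%g * f y) by ring.
    by rewrite !fV mulr1.
  by move/subsetP => P x xK; have := P x xK; rewrite inE => /eqP.
have HLe : forall f, f \in L <-> [/\ f 1%g = 1, mult f & forall x, x \in H -> f x = 1].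
  move=> f; split.
    move/HL => [[f1 fM] C]; split => //.
    exact: (forward Hchar HXu HX Hw HJ2 f1 fM C Hnd HZ).
  case=> f1 fM fH; apply/HL; split; first by split.
  exact: (converse Hchar HXu HX Hw HJ2 f1 fM fH).
have up : (size L <= #|[set: gT] : K|%g)%N.
  apply: (rank_bound Hchar HLu).
  - by move=> f /HLe[].
  - by move=> f /HLe[].
  - by move=> f /HLe[f1 fM fH]; exact: trivK.
have lo : (#|[set: gT] : K|%g <= size L)%N.
  apply: (lower_bound Hchar Kn Kab) => f f1 fM fK.
  apply/HLe; split => // x xH; apply: fK; exact: (subsetP sHK).
have -> : size L = #|[set: gT] : K|%g by apply/eqP; rewrite eqn_leq up lo.
have := Lagrange (subsetT K); rewrite cardsT => <-.
rewrite mulnK ?indexg_gt0 //; exact: cardSg.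
Qed.
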